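(* Assume (A1)–(A4). Then there exist $q>0$, $K>0$, $\delta>0$ and $b>0$ such that, with $V(x)=W(x)=1+qx^2$ and $C=[-K,K]$, $$\log\big(e^{-V}Pe^{V}\big)(x)\le-\delta W(x)+b\mathbf{1}_C(x)\quad\text{for all }x\in\mathbb{R},$$ where $Pe^V(x)=\mathbb{E}\,e^{V(x+\mu(x)+\sigma(x)\varepsilon_1)}$.
   Context: $\mu,\sigma:\mathbb{R}\to\mathbb{R}$ measurable, $(\varepsilon_t)$ i.i.d. Assumptions: (A1) $\varepsilon_1$ has a density w.r.t. Lebesgue measure, bounded and bounded away from $0$ on compacts; (A2) $\mu$ locally bounded, $\sigma$ positive, bounded away from $0$ on compacts, globally bounded; (A3) $\limsup_{|x|\to\infty}|x+\mu(x)|/|x|<1$; (A4) $\mathbb{E}e^{\kappa\varepsilon_1^2}<\infty$ for some $\kappa>0$ and $\mathbb{E}\varepsilon_1=0$. $P(x,A)=\mathbb{P}(x+\mu(x)+\sigma(x)\varepsilon_1\in A)$ is the transition kernel of the chain $X_t=X_{t-1}+\mu(X_{t-1})+\sigma(X_{t-1})\varepsilon_t$. *)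

(* Defs.v *)
From HB Require Import structures.
From mathcomp Require Import all_boot all_order all_algebra.
From mathcomp Require Import all_classical all_reals all_analysis.
Set Implicit Arguments. Unset Strict Implicit. Unset Printing Implicit Defensive.
Import Order.TTheory GRing.Theory Num.Theory.
Local Open Scope classical_set_scope.
Local Open Scope ring_scope.

(* The innovation eps_1 is a real random variable [eps] on a probability
   space (T, P).  Only its law matters for the statement. *)

Definition A1 {R : realType} {d : measure_display} {T : measurableType d}
  (P : probability T R) (eps : T -> R) : Prop :=
  exists f : R -> R,
    measurable_fun setT f /\ (forall x, 0 <= f x) /\
    (forall A : set R, measurable A ->
       P (eps @^-1` A) = (\int[lebesgue_measure]_(x in A) (f x)%:E)%E) /\
    (forall K : R, 0 < K -> exists m M : R, 0 < m /\ m <= M /\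
       forall x, `|x| <= K -> m <= f x /\ f x <= M).

Definition A2 {R : realType} (mu sigma : R -> R) : Prop :=
  (forall K : R, 0 < K -> exists M : R, forall x, `|x| <= K -> `|mu x| <= M) /\
  (forall x, 0 < sigma x) /\
  (forall K : R, 0 < K -> exists m : R, 0 < m /\ forall x, `|x| <= K -> m <= sigma x) /\
  (exists M : R, forall x, sigma x <= M).

(* (A3): limsup_{|x|->oo} |x + mu x| / |x| < 1, written out. *)
Definition A3 {R : realType} (mu : R -> R) : Prop :=
  exists lam : R, lam < 1 /\ exists R0 : R, 0 < R0 /\
    forall x, R0 <= `|x| -> `|x + mu x| / `|x| <= lam.

Definition A4 {R : realType} {d : measure_display} {T : measurableType d}
  (P : probability T R) (eps : T -> R) : Prop :=
  (exists kappa : R, 0 < kappa /\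
     (\int[P]_w (expR (kappa * eps w ^+ 2))%:E < +oo)%E) /\
  P.-integrable setT (fun w => (eps w)%:E) /\
  (\int[P]_w (eps w)%:E = 0)%E.

Definition PexpV {R : realType} {d : measure_display} {T : measurableType d}
  (P : probability T R) (eps : T -> R) (mu sigma V : R -> R) (x : R) : \bar R :=
  (\int[P]_w (expR (V (x + mu x + sigma x * eps w)))%:E)%E.

(* Main.v *)
From HB Require Import structures.
From mathcomp Require Import all_boot all_order all_algebra.
From mathcomp Require Import all_classical all_reals all_analysis.
From mathcomp Require Import measurable_realfun ring lra.
Require Import Defs.
Import Order.TTheory GRing.Theory Num.Theory.
Local Open Scope classical_set_scope.
Local Open Scope ring_scope.

Lemma mexp (R : realType) (d : measure_display) (T : measurableType d)
  (eps : T -> R) (h : R -> R) : measurable_fun setT eps ->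
  measurable_fun setT h -> measurable_fun setT (fun w => (expR (h (eps w)))%:E).
Proof.
move=> me mh.
apply/measurable_EFinP.
apply: measurableT_comp; first exact: measurable_expR.
exact: measurableT_comp.
Qed.

Lemma mpoly (R : realType) (c q a s : R) :
  measurable_fun setT (fun e : R => c + q * (a + s * e) ^+ 2).
Proof.
apply: measurable_funD => //.
apply: measurable_funM => //.
apply: measurable_funX.
by apply: measurable_funD.
Qed.

Lemma sqineq (R : realType) (u v t : R) : 0 < t < 1 ->
  (u + v) ^+ 2 <= u ^+ 2 / t + v ^+ 2 / (1 - t).
Proof.
case/andP => t0 t1.
have h1 : 0 < 1 - t by rewrite subr_gt0.
have key : 0 <= ((1 - t) * u - t * v) ^+ 2 by apply: sqr_ge0.
rewrite -subr_ge0.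
have -> : u ^+ 2 / t + v ^+ 2 / (1 - t) - (u + v) ^+ 2 =
   ((1 - t) * u - t * v) ^+ 2 / (t * (1 - t)).
  by field; rewrite ?gt_eqF ?mulr_gt0.
by rewrite divr_ge0 // ltW // mulr_gt0.
Qed.


Theorem propositionp2p5 (R : realType) (d : measure_display) (T : measurableType d)
  (P : probability T R) (eps : T -> R) (mu sigma : R -> R) :
  measurable_fun setT eps ->
  measurable_fun setT mu -> measurable_fun setT sigma ->
  A1 P eps -> A2 mu sigma -> A3 mu -> A4 P eps ->
  exists q K delta b : R, 0 < q /\ 0 < K /\ 0 < delta /\ 0 < b /\
    let V := fun x : R => 1 + q * x ^+ 2 in
    let W := V in
    forall x : R,
      (PexpV P eps mu sigma V x < +oo)%E /\
      ln (fine (PexpV P eps mu sigma V x)) - V x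
        <= - delta * W x + b * \1_(`[-K, K]) x.
Proof.
move=> meps _ _ _ [Hmu [Hsp [_ [Ms HMs]]]] [lam [lam1 [R0 [R00 HA3]]]].
move=> [[kappa [k0 Ik]] _].
have Ms0 : 0 < Ms by apply: lt_le_trans (Hsp 0) (HMs 0).
pose lp := Num.max lam 0.
have lp0 : 0 <= lp by rewrite le_max lexx orbT.
have lp1 : lp < 1 by rewrite gt_max lam1 ltr01.
pose r := lp ^+ 2.
have r0 : 0 <= r by rewrite sqr_ge0.
have r1 : r < 1 by rewrite /r expr2; nra.
pose th := (1 + r) / 2.
have th0 : 0 < th by rewrite /th; lra.
have th1 : th < 1 by rewrite /th; lra.
have rth : r < th by rewrite /th; lra.
pose g := 1 - r / th.
have g0 : 0 < g by rewrite /g subr_gt0 ltr_pdivrMr // mul1r.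
pose I := (\int[P]_w (expR (kappa * eps w ^+ 2))%:E)%E.
have mI : measurable_fun setT (fun w => (expR (kappa * eps w ^+ 2))%:E).
  apply/measurable_EFinP; apply: measurableT_comp; first exact: measurable_expR.
  by apply: measurable_funM => //; exact: measurable_funX.
have I1 : (1 <= I)%E.
  have -> : (1 = \int[P]_(w in setT) (cst 1%E) w)%E.
    by rewrite integral_cst // mul1e; exact: (esym (probability_setT P)).
  apply: ge0_le_integral => //.
  move=> w _ /=; rewrite lee_fin -expR0 ler_expR; nra.
have [c Ic] : exists c, I = c%:E.
  move: I1 Ik; rewrite -/I; case: I => [c| |] //; by exists c.
have c1 : 1 <= c by rewrite -lee_fin -Ic.
pose L := ln c.
have L0 : 0 <= L by apply: ln_ge0.
pose q := kappa * (1 - th) / Ms ^+ 2.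
have q0 : 0 < q by rewrite /q divr_gt0 ?mulr_gt0 ?exprn_gt0 // subr_gt0.
pose K := R0 + 1 + (2 * L + g) / (q * g).
have Kd : 0 <= (2 * L + g) / (q * g).
  have h2 : 0 <= 2 * L + g by lra.
  by rewrite divr_ge0 // mulr_ge0 // ltW.
have K1 : 1 <= K by rewrite /K; lra.
have K0 : 0 < K by lra.
have [Mmu HMmu] := Hmu K K0.
have Mmu0 : 0 <= Mmu.
  by apply: le_trans (HMmu 0 _); rewrite ?normr0 ?normr_ge0 // ltW.
pose delta := g / 2.
have d0 : 0 < delta by rewrite /delta; lra.
pose b := q * (K + Mmu) ^+ 2 / th + L + delta * (1 + q * K ^+ 2) + 1.
have b0 : 0 < b.
  have h1 : 0 <= q * (K + Mmu) ^+ 2 / th by apply: divr_ge0; [apply: mulr_ge0; [exact: ltW | exact: sqr_ge0] | exact: ltW].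
  have h2 : 0 <= delta * (1 + q * K ^+ 2).
    apply: mulr_ge0; first exact: ltW.
    by apply: addr_ge0 => //; apply: mulr_ge0; [exact: ltW | exact: sqr_ge0].
  rewrite /b; lra.
exists q, K, delta, b; split => //; split => //; split => //; split => //.
move=> V W x.
pose m := x + mu x; pose s := sigma x.
pose A := 1 + q * m ^+ 2 / th.
have s0 : 0 < s := Hsp x.
have sMs : s <= Ms := HMs x.
have pw : forall e : R, expR (V (x + mu x + sigma x * e)) <= expR A * expR (kappa * e ^+ 2).
  move=> e; rewrite -expRD ler_expR /V /A -/m -/s.
  have h1 := @sqineq R m (s * e) th ltac:(by rewrite th0 th1).
  have h2 : q * ((s * e) ^+ 2 / (1 - th)) = kappa * e ^+ 2 * (s ^+ 2 / Ms ^+ 2).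
    rewrite /q; field.
    by rewrite gt_eqF ?exprn_gt0 //= gt_eqF // subr_gt0.
  have h3 : s ^+ 2 / Ms ^+ 2 <= 1.
    rewrite ler_pdivrMr ?exprn_gt0 // mul1r.
    by rewrite ler_sqr ?nnegrE ?(ltW s0) ?(ltW Ms0).
  have h4 : kappa * e ^+ 2 * (s ^+ 2 / Ms ^+ 2) <= kappa * e ^+ 2.
    by rewrite ler_piMr // mulr_ge0 ?sqr_ge0 // ltW.
  have h5 : q * (m + s * e) ^+ 2 <= q * (m ^+ 2 / th + (s * e) ^+ 2 / (1 - th)).
    by rewrite ler_pM2l.
  rewrite mulrDr h2 mulrA in h5.
  rewrite /V /A -/m -/s mulrA; lra.
have mV : measurable_fun setT (fun w => (expR (V (x + mu x + sigma x * eps w)))%:E).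
  exact: (@mexp R d T eps _ meps (@mpoly R 1 q (x + mu x) (sigma x))).
have up : (PexpV P eps mu sigma V x <= (expR A * c)%:E)%E.
  rewrite /PexpV EFinM -Ic /I -ge0_integralZl_EFin //.
  apply: ge0_le_integral => //.
  - have -> : (fun x0 => (expR A)%:E * (expR (kappa * eps x0 ^+ 2))%:E)%E =
       EFin \o (fun x0 => expR A * expR (kappa * eps x0 ^+ 2)).
      by apply: funext => w; rewrite /= EFinM.
    apply/measurable_EFinP; apply: measurable_funM; first exact: measurable_cst.
    exact/measurable_EFinP.
  - by move=> w _; rewrite -EFinM lee_fin pw.
have lo : (1 <= PexpV P eps mu sigma V x)%E.
  have -> : (1 = \int[P]_(w in setT) (cst 1%E) w)%E.
    by rewrite integral_cst // mul1e; exact: (esym (probability_setT P)).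
  apply: ge0_le_integral => //.
  move=> w _ /=; rewrite lee_fin -expR0 ler_expR /V.
  by rewrite addr_ge0 // mulr_ge0 ?sqr_ge0 // ltW.
split; first by apply: le_lt_trans up _; rewrite ltry.
have [p Hp] : exists p, PexpV P eps mu sigma V x = p%:E.
  move: lo up; case: (PexpV P eps mu sigma V x) => [p| |] //; by exists p.
rewrite Hp /=.
have p1 : 1 <= p by rewrite -lee_fin -Hp.
have pu : p <= expR A * c by rewrite -lee_fin -Hp.
have lnp : ln p <= A + L.
  rewrite /L -[A in A + _]expRK -lnM ?posrE ?expR_gt0 //; last lra.
  by rewrite ler_ln // posrE ?mulr_gt0 ?expR_gt0 //; lra.
rewrite /W /V indicE mem_setE in_itv /= -ler_norml.
have xx : x ^+ 2 = `|x| ^+ 2 by rewrite real_normK ?num_real.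
have mm : m ^+ 2 = `|m| ^+ 2 by rewrite real_normK ?num_real.
have qth : 0 < q / th by rewrite divr_gt0.
have ex1 : q * m ^+ 2 / th = (q / th) * m ^+ 2 by rewrite mulrAC mulrC.
have nx0 := normr_ge0 x.
have nm0 := normr_ge0 m.
case: (leP `|x| K) => hx.
- have hm : `|m| <= K + Mmu.
    by apply: le_trans (ler_normD _ _) _; apply: lerD => //; apply: HMmu.
  have hm2 : `|m| ^+ 2 <= (K + Mmu) ^+ 2.
    by rewrite ler_sqr ?nnegrE // addr_ge0 // ltW.
  have h1 : (q / th) * m ^+ 2 <= (q / th) * (K + Mmu) ^+ 2.
    by rewrite ler_pM2l // mm.
  have hx2 : x ^+ 2 <= K ^+ 2 by rewrite xx ler_sqr ?nnegrE // ltW.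
  have h2 : delta * (q * x ^+ 2) <= delta * (q * K ^+ 2).
    by rewrite ler_pM2l // ler_pM2l.
  have h3 : q * (K + Mmu) ^+ 2 / th = (q / th) * (K + Mmu) ^+ 2 by rewrite mulrAC mulrC.
  rewrite /b /A in lnp *; rewrite mulr1.
  rewrite ex1 in lnp; rewrite h3.
  have h4 : 0 <= q * x ^+ 2 by rewrite mulr_ge0 ?sqr_ge0 // ltW.
  lra.
- have xR0 : R0 <= `|x| by rewrite /K in hx; lra.
  have x0 : 0 < `|x| by lra.
  have hm : `|m| <= lp * `|x|.
    have := HA3 x xR0; rewrite -/m ler_pdivrMr // => h.
    by apply: le_trans h _; rewrite ler_pM2r // le_max lexx.
  have hm2 : `|m| ^+ 2 <= r * `|x| ^+ 2.
    rewrite /r -exprMn ler_sqr ?nnegrE // mulr_ge0 //.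
  have h1 : (q / th) * m ^+ 2 <= (q / th) * (r * x ^+ 2).
    by rewrite ler_pM2l // mm xx.
  have h2 : (q / th) * (r * x ^+ 2) = q * x ^+ 2 * (1 - g).
    by rewrite /g; field; rewrite gt_eqF.
  have hK : (2 * L + g) / (q * g) <= K.
    by rewrite /K; lra.
  have hK2 : K <= x ^+ 2.
    have h : `|x| <= `|x| ^+ 2 by rewrite expr2 ler_peMr //; lra.
    rewrite xx; lra.
  have h3 : 2 * L + g <= q * g * x ^+ 2.
    rewrite -ler_pdivrMl; last by rewrite mulr_gt0.
    by rewrite mulrC; exact: le_trans hK hK2.
  have h4 : q * g * x ^+ 2 = g * (q * x ^+ 2) by rewrite mulrAC mulrC.
  have h5 : q * x ^+ 2 * (1 - g) = q * x ^+ 2 - g * (q * x ^+ 2) by ring.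
  have eA : A = 1 + (q / th) * m ^+ 2 by rewrite /A ex1.
  have hd : - delta * (1 + q * x ^+ 2) = - (g / 2) - (g * (q * x ^+ 2)) / 2.
    by rewrite /delta; ring.
  rewrite [b * _](_ : _ = 0); last by rewrite /= mulr0.
  rewrite addr0 hd.
  rewrite eA in lnp.
  rewrite h4 in h3; rewrite h2 h5 in h1.
  lra.
Qed.
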